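(* Assume $\overline{c}>p$. Then there exist constants $K_2>0$ and $K_3>0$ such that $$V(x_2,c)-V(x_1,c)\le\left[K_2+\frac{K_3}{c-p}\right](x_2-x_1)$$ for all $0\le x_1\le x_2$ and $p<c\le\overline{c}$.
   Context: Cramér–Lundberg model: the uncontrolled surplus is $X_t=x+pt-\sum_{i=1}^{N_t}U_i$, where $x\ge0$ is the initial surplus, $p>0$ the premium rate, $N_t$ a Poisson process with intensity $\beta>0$, and the claims $U_i$ are i.i.d. positive random variables, independent of $N$, with continuous distribution function $F$; $p>\beta\mathbb{E}[U_1]$. Standing assumption (A1): $F$ is globally Lipschitz, $0\le F(y)-F(x)\le K(y-x)$ for $x<y$. Let $(\mathcal{F}_t)$ be the completed filtration generated by $X$. Fix $\overline{c}>0$ and $q>0$. $\Pi_{x,c,\overline{c}}$ is the set of càdlàg, adapted, non-decreasing processes $C$ with $c\le C_t\le\overline{c}$; $X^C_t=X_t-\int_0^tC_sds$ ($X_0=x$), $\tau=\inf\{t\ge0:X^C_t<0\}$, $J(x;C)=\mathbb{E}[\int_0^\tau e^{-qs}C_sds]$, $V(x,c)=\sup_{C\in\Pi_{x,c,\overline{c}}}J(x;C)$. *)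

(* Defs.v *)
From HB Require Import structures.
From mathcomp Require Import all_boot all_order all_algebra.
From mathcomp Require Import all_classical all_reals all_analysis.
Set Implicit Arguments. Unset Strict Implicit. Unset Printing Implicit Defensive.
Import Order.TTheory GRing.Theory Num.Theory.
Import numFieldNormedType.Exports.
Local Open Scope classical_set_scope.
Local Open Scope ring_scope.

Section CL.
Context {d : measure_display} {T : measurableType d} {R : realType}.
Variable (P : probability T R).

Definition mutually_independent (I : eqType) (Y : I -> T -> R) : Prop :=
  forall (s : seq I) (B : I -> set R), uniq s -> (forall i, measurable (B i)) ->
    P (\big[setI/setT]_(i <- s) (Y i @^-1` B i)) =
    (\prod_(i <- s) P (Y i @^-1` B i))%E.

(* Arrival time of the (n+1)-th claim: S_{n+1} = E_0 + ... + E_n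
   (E = i.i.d. exponential inter-arrival times of the Poisson process N). *)
Definition arrival (E : nat -> T -> R) (n : nat) (w : T) : R :=
  \sum_(i < n.+1) E i w.

(* Aggregate claims  \sum_{i=1}^{N_t} U_i = \sum_n 1{S_{n+1} <= t} U_{n+1}. *)
Definition agg_claims (E U : nat -> T -> R) (t : R) (w : T) : R :=
  limn (fun m => \sum_(i < m) (((arrival E i w <= t)%R : bool)%:R * U i w)).

Definition surplus (E U : nat -> T -> R) (x p t : R) (w : T) : R :=
  x + p * t - agg_claims E U t w.

Definition natural_sigma (X : R -> T -> R) (t : R) : set (set T) :=
  <<s [set A | exists s, 0 <= s <= t /\ exists B, measurable B /\ A = X s @^-1` B] >>.

Definition completed_filtration (X : R -> T -> R) (t : R) : set (set T) :=
  [set A | exists2 B, natural_sigma X t B &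
     exists N, [/\ measurable N, P N = 0%E & (A `\` B) `|` (B `\` A) `<=` N]].

Definition admissible (E U : nat -> T -> R) (x p c cbar : R) (C : R -> T -> R) : Prop :=
  [/\
      (forall t, 0 <= t -> forall B : set R, measurable B ->
         completed_filtration (surplus E U x p) t (C t @^-1` B)),
      (forall w t, 0 <= t -> (fun s => C s w) @ at_right t --> C t w),
      (forall w t, 0 < t -> cvg ((fun s => C s w) @ at_left t)),
      (forall w s t, 0 <= s -> s <= t -> C s w <= C t w) &
      (forall w t, 0 <= t -> c <= C t w <= cbar)].

Definition controlled_surplus (E U : nat -> T -> R) (x p : R) (C : R -> T -> R)
    (t : R) (w : T) : R :=
  surplus E U x p t w - Rintegral lebesgue_measure `[0, t] (fun s => C s w).

Definition ruin_time (E U : nat -> T -> R) (x p : R) (C : R -> T -> R) (w : T)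
  : \bar R :=
  ereal_inf [set t%:E | t in [set t | 0 <= t /\ controlled_surplus E U x p C t w < 0]].

Definition payoff (E U : nat -> T -> R) (x p q : R) (C : R -> T -> R) : \bar R :=
  (\int[P]_w (\int[lebesgue_measure]_(s in [set s : R | (0 <= s)%R /\ (s%:E < ruin_time E U x p C w)%E])
               ((expR (- (q * s)) * C s w)%R)%:E))%E.

Definition value_fun (E U : nat -> T -> R) (p q cbar x c : R) : \bar R :=
  ereal_sup [set payoff E U x p q C | C in admissible E U x p c cbar].

End CL.

(* Main.v *)
Require Import Defs.
From HB Require Import structures.
From mathcomp Require Import all_boot all_order all_algebra.
From mathcomp Require Import all_classical all_reals all_analysis.
From mathcomp Require Import lra ring measurable_realfun.
Import Order.TTheory GRing.Theory Num.Theory.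
Import numFieldNormedType.Exports.
Local Open Scope classical_set_scope.
Local Open Scope ring_scope.

Lemma int_itv (R : realType) (f : R -> R) (b1 b2 : bool) (a b M : R) :
  measurable_fun [set: R] f -> (forall x, `|f x| <= M) ->
  lebesgue_measure.-integrable [set` Interval (BSide b1 a) (BSide b2 b)] (EFin \o f).
Proof.
move=> mf fM; apply: measurable_bounded_integrable => //.
- rewrite [X in (X < _)%E](_ : _ = (if a < b then b - a else 0)%:E) ?ltry //.
  apply: (etrans (lebesgue_measure_itv _)) => /=.
  by rewrite lte_fin; case: ifP.
- exact: measurable_funS mf.
exists M; split; first exact: num_real.
by move=> M' MM' x _ /=; exact: le_trans (fM x) (ltW MM').
Qed.

Lemma Cint_bound (R : realType) (c cbar : R) (C : R -> R) (t t' : R) :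
  0 < c -> (forall s, 0 <= s -> c <= C s <= cbar) ->
  (forall s u, 0 <= s -> s <= u -> C s <= C u) -> 0 <= t -> t <= t' ->
  c * (t' - t) <= Rintegral lebesgue_measure `[0, t'] C - Rintegral lebesgue_measure `[0, t] C.
Proof.
move=> c0 Cb Cm t0 tt'.
pose g := fun s : R => C (Num.max s 0).
have Cg (A : set R) : A `<=` [set s | 0 <= s] -> Rintegral lebesgue_measure A C = Rintegral lebesgue_measure A g.
  move=> As; apply: eq_Rintegral => s /[!inE] /As s0.
  by rewrite /g max_l.
have sub (u : R) : `[0, u]%classic `<=` [set s : R | 0 <= s].
  by move=> s /=; rewrite in_itv /= => /andP[].
rewrite !Cg //.
have mg : measurable_fun [set: R] g.
  apply: nondecreasing_measurable => // s u su.
  apply: Cm; first by rewrite le_max lexx orbT.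
  by rewrite ge_max !le_max su lexx !orbT.
have ig : lebesgue_measure.-integrable `[0, t']%classic (EFin \o g).
  apply: measurable_bounded_integrable => //.
  - rewrite [X in (X < _)%E](_ : _ = (if (0 < t') then t' - 0 else 0)%:E) ?ltry //.
    apply: (etrans (lebesgue_measure_itv _)) => /=.
    by rewrite lte_fin; case: ifP => //; rewrite -EFinB.
  - exact: measurable_funS mg.
  exists cbar; split; first exact: num_real.
  move=> M cM s _; rewrite /g.
  have /andP[h1 h2] : c <= C (Num.max s 0) <= cbar by apply: Cb; rewrite le_max lexx orbT.
  rewrite /= ger0_norm; last by apply: le_trans h1; exact: ltW.
  exact: le_trans h2 (ltW cM).
rewrite Rintegral_itvB //; try by rewrite bnd_simp.
rewrite -(_ : Rintegral lebesgue_measure `]t, t']%classic (fun _ => c) = c * (t' - t)).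
  apply: le_Rintegral => //.
  - by apply: (@int_itv _ _ _ _ _ _ `|c|) => //; exact: measurable_cst.
  - by apply: (integrableS _ _ _ ig) => //; apply: subset_itvr; rewrite bnd_simp.
  move=> s /=; rewrite in_itv /= => /andP[ts _].
  have /andP[h1 _] : c <= C (Num.max s 0) <= cbar by apply: Cb; rewrite le_max lexx orbT.
  exact: h1.
rewrite Rintegral_cst //; congr (_ * _).
rewrite [X in fine X](_ : _ = (t' - t)%:E) //.
apply: (etrans (lebesgue_measure_itv _)) => /=.
rewrite lte_fin; case: ifP => [_|/negbT]; first by rewrite EFinB.
rewrite -leNgt => t't.
have -> : t' = t by apply/eqP; rewrite eq_le t't tt'.
by rewrite subrr.
Qed.

Lemma arrivalS d (T : measurableType d) (R : realType) (E : nat -> T -> R) n w :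
  arrival E n.+1 w = arrival E n w + E n.+1 w.
Proof. by rewrite /arrival big_ord_recr. Qed.

Lemma arrival_unbounded d (T : measurableType d) (R : realType) (E : nat -> T -> R) w :
  (forall i, 0 <= E i w) -> (forall n, exists i, (n <= i)%N /\ 1 < E i w) ->
  forall t : R, exists n0, forall i, (n0 <= i)%N -> t < arrival E i w.
Proof.
move=> E0 Einf.
have mono n m : (n <= m)%N -> arrival E n w <= arrival E m w.
  elim: m => [|m IH]; first by rewrite leqn0 => /eqP->.
  rewrite leq_eqVlt => /orP[/eqP->//|]; rewrite ltnS => /IH h.
  by rewrite arrivalS (le_trans h) // lerDl.
have step n i : (n < i)%N -> arrival E n w + E i w <= arrival E i w.
  case: i => // i; rewrite ltnS => ni.
  by rewrite arrivalS lerD2r mono.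
have a0 n : 0 <= arrival E n w by rewrite /arrival sumr_ge0.
have big (K : nat) : exists n, K%:R < arrival E n w.
  elim: K => [|K [n Hn]].
    have [i [_ Ei]] := Einf 0%N; exists i.
    apply: lt_le_trans (lt_trans ltr01 Ei) _.
    case: i Ei => [|i] Ei; first by rewrite /arrival big_ord1.
    by rewrite -[X in X <= _]add0r (le_trans _ (step 0%N _ _)) // lerD2r.
  have [i [ni Ei]] := Einf n.+1; exists i.
  apply: lt_le_trans (step n i ni); rewrite -natr1; exact: ltrD.
move=> t; have [n Hn] := big (Num.Def.archi_bound `|t|).
exists n => i ni; apply: lt_le_trans (mono _ _ ni).
apply: le_lt_trans Hn; apply: le_trans (ltW (archi_boundP (normr_ge0 t))).
exact: ler_norm.
Qed.

Lemma agg_mono d (T : measurableType d) (R : realType) (E U : nat -> T -> R) w t t' :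
  (forall i, 0 <= E i w) -> (forall n, exists i, (n <= i)%N /\ 1 < E i w) ->
  (forall i, 0 < U i w) -> t <= t' ->
  agg_claims E U t w <= agg_claims E U t' w.
Proof.
move=> E0 Einf U0 tt'.
have [n0 Hn0] := arrival_unbounded _ _ _ _ _ E0 Einf t'.
pose Sm := fun (u : R) (m : nat) => \sum_(i < m) (((arrival E i w <= u)%R : bool)%:R * U i w).
have Sc u : u <= t' -> limn (Sm u) = Sm u n0.
  move=> ut; apply: lim_near_cst => //; near=> m.
  suff H : forall k, Sm u (n0 + k)%N = Sm u n0.
    have nm : (n0 <= m)%N by near: m; exists n0.
    by rewrite -(subnKC nm) H.
  elim=> [|k IH]; first by rewrite addn0.
  rewrite /Sm addnS big_ord_recr /= -/(Sm u (n0 + k)%N) IH.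
  have : u < arrival E (n0 + k)%N w by apply: le_lt_trans ut (Hn0 _ (leq_addr _ _)).
  by rewrite ltNge => /negbTE ->; rewrite mul0r addr0.
rewrite /agg_claims -/(Sm t) -/(Sm t') (Sc t tt') (Sc t' (lexx _)).
apply: ler_sum => i _; apply: ler_wpM2r; first exact: ltW.
case: (boolP (arrival E i w <= t)) => h; last by rewrite ler0n.
by rewrite (le_trans h tt').
Unshelve. all: by end_near.
Qed.

Lemma bad_negl d (T : measurableType d) (R : realType) (P : probability T R) (beta : R)
  (E U : nat -> T -> R) :
  0 < beta -> (forall n, measurable_fun setT (E n)) ->
  (forall n y, P [set w | E n w <= y] =
            (if 0 <= y then 1 - expR (- (beta * y)) else 0)%:E) ->
  mutually_independent P (fun i : nat + nat => match i with inl n => E n | inr n => U n end) ->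
  P.-negligible [set w | ~ ((forall i, 0 <= E i w) /\ (forall n, exists i, (n <= i)%N /\ 1 < E i w))].
Proof.
move=> b0 hEm hEexp hind.
have mle n y : measurable [set w | E n w <= y].
  rewrite (_ : [set w | _] = setT `&` E n @^-1` `]-oo, y]%classic).
    by apply: hEm => //; exact: measurable_itv.
  by apply/seteqP; split=> w /=; rewrite in_itv /= ?andbT //; move=> [_ ->].
have neg1 i : P.-negligible [set w | E i w < 0].
  apply: (@negligibleS _ _ _ _ (\bigcup_k [set w | E i w <= - (k.+1%:R)^-1])).
    move=> w /= Ew; exists (Num.Def.archi_bound ((- E i w)^-1)) => //=.
    have Ep : 0 < - E i w by rewrite oppr_gt0.
    have Ei : 0 < (- E i w)^-1 by rewrite invr_gt0.
    have := archi_boundP (ltW Ei).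
    set k := Num.Def.archi_bound _ => hk.
    rewrite lerNr -(invrK (- E i w)) lef_pV2 ?posrE ?invr_gt0 //.
    by apply: ltW; apply: lt_le_trans hk _; rewrite ler_nat.
  apply: negligible_bigcup => k; exists [set w | E i w <= - (k.+1%:R)^-1]; split => //.
  apply: (etrans (hEexp i _)).
  by rewrite ifF // lerNr oppr0 leNgt invr_gt0 ltr0Sn.
set rho := 1 - expR (- beta).
have rho0 : 0 <= rho by rewrite /rho subr_ge0 expR_le1 oppr_le0 ltW.
have rho1 : rho < 1 by rewrite /rho ltrBlDr ltrDl expR_gt0.
have neg2 n : P.-negligible [set w | forall i, (n <= i)%N -> E i w <= 1].
  set A := [set w | _].
  have mA : measurable A.
    rewrite (_ : A = \bigcap_(i in [set i | (n <= i)%N]) [set w | E i w <= 1]).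
      by apply: bigcap_measurableType.
    by apply/seteqP; split => w /= h i; [move=> ni; exact: h|exact: h].
  exists A; split => //.
  have sub m n' w : (forall i, (n' <= i)%N -> E i w <= 1) ->
      (\big[setI/setT]_(j <- iota n' m) [set w | E j w <= 1]) w.
    elim: m n' => [|m IH] n' Aw; first by rewrite big_nil.
    rewrite /= big_cons; split; first exact: Aw.
    by apply: IH => i ni; apply: Aw; exact: ltnW.
  have mB : forall i : nat + nat, measurable ((fun=> [set y : R | y <= 1]) i).
    move=> _; rewrite (_ : [set y | _] = `]-oo, 1]%classic); first exact: measurable_itv.
    by apply/seteqP; split => y /=; rewrite in_itv.
  have H m : P (\big[setI/setT]_(j <- iota n m) [set w | E j w <= 1]) = (rho ^+ m)%:E.
    have := hind (map inl (iota n m)) (fun _ => [set y : R | y <= 1]).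
    rewrite map_inj_uniq ?iota_uniq; last by move=> ? ? [].
    move=> /(_ isT mB); rewrite !big_map /= => ->.
    rewrite (eq_bigr (fun _ => rho%:E)); last first.
      by move=> j _; apply: (etrans (hEexp j 1)); rewrite ler01 mulr1.
    by rewrite prodEFin big_const_seq count_predT size_iota iter_mulr_1.
  have hB m : (P A <= (rho ^+ m)%:E)%E.
    rewrite -H; apply: le_measure; rewrite ?inE //.
      by apply: bigsetI_measurable.
    by move=> w Aw; apply: sub.
  have PA0 : (0 <= P A)%E by [].
  have PAfin : P A \is a fin_num.
    by rewrite ge0_fin_numE // (le_lt_trans (hB 0%N)) // ltry.
  apply/eqP; rewrite -(fineK PAfin) eqe; rewrite eq_le fine_ge0 // andbT.
  have: fine (P A) <= limn (fun m => rho ^+ m).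
    apply: limr_ge.
      by apply: cvgP (cvg_expr _); rewrite ger0_norm.
    by near=> m; rewrite -lee_fin fineK // hB.
  by rewrite (cvg_lim _ (cvg_expr _)) // ger0_norm.
apply: (@negligibleS _ _ _ _ ((\bigcup_i [set w | E i w < 0]) `|`
   (\bigcup_n [set w | forall i, (n <= i)%N -> E i w <= 1]))).
  move=> w /= Hbad; apply: contrapT => Hn; apply: Hbad; split.
    move=> i; rewrite leNgt; apply/negP => Ei; apply: Hn; left; by exists i.
  move=> n; apply: contrapT => Hn2; apply: Hn; right; exists n => //= i ni.
  rewrite leNgt; apply/negP => Ei; apply: Hn2; exists i; done.
by apply: negligibleU; apply: negligible_bigcup.
Unshelve. all: by end_near.
Qed.

Lemma adm_shift d (T : measurableType d) (R : realType) (P : probability T R)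
  (E U : nat -> T -> R) x1 x2 p c cbar C :
  admissible P E U x2 p c cbar C -> admissible P E U x1 p c cbar C.
Proof.
case=> ad h2 h3 h4 h5; split => //.
move=> t t0 B mB; have [A nA [N [mN PN HN]]] := ad t t0 B mB.
exists A => //; last by exists N.
apply: (smallest_sub (smallest_sigma_algebra _ _) _ nA).
move=> _ [s [s0 [B' [mB' ->]]]].
apply: sub_sigma_algebra; exists s; split => //.
exists ((fun y => y + (x2 - x1)) @^-1` B'); split.
  rewrite -[X in measurable X]setTI; apply: measurable_funD => //; exact: measurable_cst.
apply/seteqP; split => w /=; rewrite /surplus.
  by rewrite (_ : x2 + p * s - _ = x1 + p * s - agg_claims E U s w + (x2 - x1)) //; lra.
by rewrite (_ : x2 + p * s - _ = x1 + p * s - agg_claims E U s w + (x2 - x1)) //; lra.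
Qed.

Local Open Scope ereal_scope.
Import HBNNSimple.

Lemma lower_mono d (T : measurableType d) (R : realType) (mu : {measure set T -> \bar R})
  (f g : T -> \bar R) : (forall w, 0 <= f w) -> (forall w, 0 <= g w) ->
  (forall w, f w <= g w) -> \int[mu]_w f w <= \int[mu]_w g w.
Proof.
move=> f0 g0 fg; rewrite (ge0_integralTE _ f0) (ge0_integralTE _ g0).
apply: ereal_sup_le => _ [h hf <-]; exists h => //= w.
exact: le_trans (hf w) (fg w).
Qed.

Lemma lower_le d (T : measurableType d) (R : realType) (P : probability T R)
  (f g : T -> \bar R) (k : R) (N : set T) :
  (forall w, 0 <= f w) -> (forall w, 0 <= g w) -> (0 <= k)%R ->
  P.-negligible N -> (forall w, ~ N w -> g w <= f w + k%:E) ->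
  \int[P]_w g w <= \int[P]_w f w + k%:E.
Proof.
move=> f0 g0 k0 [A [mA PA NA]] gf.
rewrite (ge0_integralTE _ g0); apply: ge_ereal_sup => _ [h hg <-].
rewrite -integralT_nnsfun.
pose psi := fun w => ((fun w => h w - k)^\+ w * \1_(~` A) w)%R.
have mpsi : measurable_fun setT psi.
  apply: measurable_realfun.measurable_funM.
    apply: measurable_realfun.measurable_funrpos; apply: measurable_realfun.measurable_funB => //.
  by apply: measurable_realfun.measurable_indic; exact: measurableC.
have psi0 w : (0 <= psi w)%R.
  by rewrite /psi mulr_ge0// ?funrpos_ge0// indicE.
apply: (@le_trans _ _ (\int[P]_w ((psi w)%:E + k%:E))).
  apply: ae_ge0_le_integral => //.
  - by move=> w _; rewrite lee_fin.
  - by apply/measurable_realfun.measurable_EFinP; exact: measurable_funPT.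
  - by move=> w _; rewrite adde_ge0// lee_fin.
  - apply: emeasurable_funD; first exact/measurable_realfun.measurable_EFinP.
    exact: measurable_cst.
  exists A; split => // w /= hw; apply: contra_notP hw => Aw _.
  rewrite /psi indicE mem_set; last by [].
  by rewrite mulr1 -EFinD lee_fin -lerBlDr /funrpos le_max lexx.
rewrite ge0_integralD //; try (by move=> w _; rewrite lee_fin);
  try exact/measurable_realfun.measurable_EFinP.
rewrite integral_cst //.
rewrite (_ : _ * _ = k%:E); last by rewrite -[RHS]mule1; congr (_ * _); exact: probability_setT.
rewrite leeD2r //.
apply: lower_mono => // w.
rewrite /psi indicE; have [Aw|Aw] := boolP (w \in ~` A).
  rewrite mulr1 /funrpos EFin_max ge_max f0 andbT EFinB leeBlDr //.
  apply: le_trans (hg w) (gf w _).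
  by move=> Nw; move: Aw; rewrite inE /=; apply; apply: NA.
by rewrite mulr0.
Qed.


Lemma ruin_ge0 d (T : measurableType d) (R : realType) (E U : nat -> T -> R) x p C w :
  0 <= ruin_time E U x p C w.
Proof. by apply: le_ereal_inf_tmp => _ [t [t0 _] <-]; rewrite lee_fin. Qed.

Lemma cs_shift d (T : measurableType d) (R : realType) (E U : nat -> T -> R) x1 x2 p C t w :
  controlled_surplus E U x2 p C t w = (controlled_surplus E U x1 p C t w + (x2 - x1))%R.
Proof. rewrite /controlled_surplus /surplus; lra. Qed.

Lemma ruin_shift d (T : measurableType d) (R : realType) (E U : nat -> T -> R)
  x1 x2 p c C w : (p < c)%R -> (x1 <= x2)%R ->
  (forall t t', 0 <= t -> t <= t' ->
     controlled_surplus E U x1 p C t' w <= controlled_surplus E U x1 p C t w - (c - p) * (t' - t))%R ->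
  ruin_time E U x2 p C w <= ruin_time E U x1 p C w + ((x2 - x1) / (c - p))%:E.
Proof.
move=> pc x12 hm.
have cp : (0 < c - p)%R by rewrite subr_gt0.
have := ruin_ge0 _ _ _ E U x1 p C w.
case Et : (ruin_time E U x1 p C w) => [r| |] // r0; last by rewrite addye // leey.
apply/lee_addgt0Pr => e e0.
have : ruin_time E U x1 p C w < r%:E + (e / 2)%:E.
  by rewrite Et lteDl // lte_fin divr_gt0.
rewrite /ruin_time => /ereal_inf_lt [_ [t [t0 ht] <-]]; rewrite -EFinD lte_fin => htr.
pose t' := (t + (x2 - x1) / (c - p) + e / 2)%R.
have t'0 : (0 <= t')%R.
  by rewrite /t' addr_ge0 ?addr_ge0 ?divr_ge0 ?subr_ge0 // ltW.
apply: (@le_trans _ _ t'%:E).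
  apply: ereal_inf_lbound; exists t' => //; split => //.
  rewrite (cs_shift _ _ _ _ _ x1).
  have := hm t t' t0; rewrite /t'.
  have a0 : (0 <= (x2 - x1) / (c - p))%R by rewrite divr_ge0 // subr_ge0 // ltW.
  move=> /(_ _) H; have {H} := H ltac:(lra).
  have -> : ((c - p) * (t + (x2 - x1) / (c - p) + e / 2 - t) = (x2 - x1) + (c - p) * (e / 2))%R.
    by field; rewrite gt_eqF.
  have : (0 < (c - p) * (e / 2))%R by rewrite mulr_gt0 // divr_gt0.
  lra.
rewrite /t' -!EFinD lee_fin; lra.
Qed.


Definition innerI {R : realType} (q : R) (C : R -> R) (tau : \bar R) :=
  \int[lebesgue_measure]_(s in [set s : R | (0 <= s)%R /\ (s%:E < tau)%E])
     ((expR (- (q * s)) * C s)%R)%:E.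

Lemma mD_tau (R : realType) (tau : \bar R) :
  measurable [set s : R | (0 <= s)%R /\ (s%:E < tau)%E].
Proof.
case: tau => [r| |].
- rewrite (_ : [set s | _] = `[0%R, r[%classic); first exact: measurable_itv.
  by apply/seteqP; split => s /=; rewrite in_itv /= lte_fin => /andP.
- rewrite (_ : [set s | _] = `[0%R, +oo[%classic); first exact: measurable_itv.
  by apply/seteqP; split => s /=; rewrite in_itv /= ?andbT ?ltry => -[].
- rewrite (_ : [set s | _] = set0) //.
  by apply/seteqP; split => s //= -[].
Qed.

Lemma inner_bound (R : realType) (q c cbar a : R) (C : R -> R) (tau1 tau2 : \bar R) :
  (0 < q)%R -> (0 < c)%R -> (0 <= a)%R ->
  (forall s, (0 <= s)%R -> (c <= C s <= cbar)%R) ->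
  (forall s t, (0 <= s)%R -> (s <= t)%R -> (C s <= C t)%R) ->
  0 <= tau1 -> tau2 <= tau1 + a%:E ->
  innerI q C tau2 <= innerI q C tau1 + (cbar * a)%:E.
Proof.
move=> q0 c0 a0 Cb Cm tau10 tau21.
pose g := fun s : R => ((expR (- (q * s)) * C (Num.max s 0%R))%R)%:E.
have eqg tau : innerI q C tau = \int[lebesgue_measure]_(s in [set s : R | (0 <= s)%R /\ (s%:E < tau)%E]) g s.
  apply: eq_integral => s /[!inE] -[s0 _].
  by rewrite /g max_l.
have mg : measurable_fun [set: R] (g : R -> \bar R).
  apply/measurable_realfun.measurable_EFinP.
  apply: measurable_realfun.measurable_funM.
    apply: measurable_realfun.nonincreasing_measurable => // s t st.
    by rewrite ler_expR lerN2 ler_pM2l.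
  apply: measurable_realfun.nondecreasing_measurable => // s t st.
  apply: Cm; first by rewrite le_max lexx orbT.
  by rewrite ge_max !le_max st lexx !orbT.
have g0 s : 0 <= g s.
  rewrite /g lee_fin mulr_ge0 // ?expR_ge0 //.
  have := Cb (Num.max s 0%R); rewrite le_max lexx orbT => /(_ isT) /andP[+ _].
  by apply: le_trans; exact: ltW.
have gle s : (0 <= s)%R -> g s <= cbar%:E.
  move=> s0; rewrite /g lee_fin.
  have /andP[C1 C2] : (c <= C (Num.max s 0%R) <= cbar)%R by apply: Cb; rewrite le_max lexx orbT.
  rewrite -[cbar]mul1r ler_pM // ?expR_ge0 //.
    by apply: le_trans C1; exact: ltW.
  by rewrite expR_le1 oppr_le0 mulr_ge0 // ltW.
have cbar0 : (0 <= cbar)%R by have /andP[h1 h2] := Cb 0%R (lexx _); lra.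
rewrite !eqg.
move: tau10 tau21; case: tau1 => [r| |] // r0 tau21; last first.
  apply: le_trans (leeDl _ _); last by rewrite lee_fin mulr_ge0.
  apply: ge0_subset_integral => //; try exact: mD_tau.
  - exact: measurable_funS mg.
  - by move=> s [s0 _]; split => //; rewrite ltry.
set D1 := [set s : R | (0 <= s)%R /\ (s%:E < r%:E)].
have mD1 : measurable D1 by exact: mD_tau.
have mI : measurable (`[r, (r + a)%R[%classic : set R) by exact: measurable_itv.
apply: (@le_trans _ _ (\int[lebesgue_measure]_(s in D1 `|` `[r, (r + a)%R[%classic) g s)).
  apply: ge0_subset_integral => //; first exact: mD_tau.
  - exact: measurableU.
  - exact: measurable_funS mg.
  move=> s [s0 st2].
  have [sr|rs] := ltP s r; first by left; split => //; rewrite lte_fin.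
  right; rewrite /= in_itv /= rs /= -lte_fin EFinD.
  exact: lt_le_trans st2 tau21.
rewrite ge0_integral_setU //; last 2 first.
  - exact: measurable_funS mg.
  - rewrite disj_set2E; apply/eqP/seteqP; split => // s [[_ +] /=].
    by rewrite in_itv /= lte_fin => sr /andP[rs _]; move: (lt_le_trans sr rs); rewrite ltxx.
rewrite leeD2l //.
apply: (@le_trans _ _ (\int[lebesgue_measure]_(s in `[r, (r + a)%R[%classic) (cst cbar%:E) s)).
  apply: ge0_le_integral => //.
  - exact: measurable_funS mg.
  - move=> s /=; rewrite in_itv /= => /andP[rs _]; apply: gle.
    by apply: le_trans rs; rewrite -lee_fin.
rewrite integral_cst // [X in _ * X](_ : _ = a%:E) ?EFinM //.
apply: (etrans (lebesgue_measure_itv _)) => /=.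
case: ifP; first by move=> _; rewrite -EFinB; congr EFin; ring.
rewrite lte_fin ltrDl => /negbT; rewrite -leNgt => a0'.
by have -> : a = 0%R by apply/eqP; rewrite eq_le a0 a0'.
Qed.

Local Close Scope ereal_scope.
Theorem lemma9p3 (d : measure_display) (T : measurableType d) (R : realType)
  (P : probability T R) (beta p q cbar : R) (E U : nat -> T -> R) (F : R -> R)
  (hbeta : 0 < beta) (hp : 0 < p) (hq : 0 < q)
  (hEm : forall n, measurable_fun setT (E n))
  (hUm : forall n, measurable_fun setT (U n))
  (hEexp : forall n y, P [set w | E n w <= y] =
            (if 0 <= y then 1 - expR (- (beta * y)) else 0)%:E)
  (hUF : forall n y, P [set w | U n w <= y] = (F y)%:E)
  (hUpos : forall n w, 0 < U n w)
  (hindep : mutually_independent P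
              (fun i : nat + nat => match i with inl n => E n | inr n => U n end))
  (hFcont : continuous F)
  (hA1 : exists K : R, forall x y, x < y -> 0 <= F y - F x <= K * (y - x))
  (hnet : (beta%:E * \int[P]_w (U 0%N w)%:E < p%:E)%E)
  (hcbar : p < cbar) :
  exists K2 K3 : R, [/\ 0 < K2, 0 < K3 &
    forall x1 x2 c, 0 <= x1 -> x1 <= x2 -> p < c -> c <= cbar ->
      (value_fun P E U p q cbar x2 c - value_fun P E U p q cbar x1 c
        <= ((K2 + K3 / (c - p)) * (x2 - x1))%:E)%E].
Proof.
Proof.
have cb0 : 0 < cbar by apply: lt_trans hcbar.
exists 1, cbar; split => //.
move=> x1 x2 c x10 x12 pc ccb.
have cp : 0 < c - p by rewrite subr_gt0.
set a := (x2 - x1) / (c - p).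
have a0 : 0 <= a by rewrite divr_ge0 // ?subr_ge0 // ltW.
have c0 : 0 < c by apply: lt_trans pc.
have key : forall C, admissible P E U x2 p c cbar C ->
    (payoff P E U x2 p q C <= payoff P E U x1 p q C + (cbar * a)%:E)%E.
  move=> C [_ _ _ Cm Cb].
  have Cge s w : 0 <= s -> 0 <= expR (- (q * s)) * C s w.
    move=> s0; rewrite mulr_ge0 ?expR_ge0 //.
    by have /andP[h _] := Cb w s s0; exact: le_trans (ltW c0) h.
  rewrite /payoff; apply: (lower_le _ _ _ P).
  - by move=> w; apply: integral_ge0 => s [s0 _]; rewrite lee_fin Cge.
  - by move=> w; apply: integral_ge0 => s [s0 _]; rewrite lee_fin Cge.
  - by rewrite mulr_ge0 // ltW.
  - exact: (bad_negl _ _ _ P beta E U hbeta hEm hEexp hindep).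
  move=> w /= /contrapT [Enn Einf].
  have hm t t' : 0 <= t -> t <= t' -> controlled_surplus E U x1 p C t' w <=
      controlled_surplus E U x1 p C t w - (c - p) * (t' - t).
    move=> t0 tt'.
    have := Cint_bound _ c cbar (fun s => C s w) t t' c0 (fun s s0 => Cb w s s0)
      (fun s u s0 su => Cm w s u s0 su) t0 tt'.
    have := agg_mono _ _ _ E U w t t' Enn Einf (fun i => hUpos i w) tt'.
    rewrite /controlled_surplus /surplus; lra.
  have h := ruin_shift _ _ _ E U x1 x2 p c C w pc x12 hm.
  exact: (inner_bound _ q c cbar a (fun s => C s w) _ _ hq c0 a0 (fun s s0 => Cb w s s0)
    (fun s u s0 su => Cm w s u s0 su) (ruin_ge0 _ _ _ E U x1 p C w) h).
have V2le : (value_fun P E U p q cbar x2 c <= value_fun P E U p q cbar x1 c + (cbar * a)%:E)%E.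
  apply: ge_ereal_sup => _ [C hC <-].
  apply: le_trans (key C hC) _; rewrite leeD2r //.
  by apply: ereal_sup_ubound; exists C => //; exact: adm_shift hC.
have -> : (1 + cbar / (c - p)) * (x2 - x1) = (x2 - x1) + cbar * a.
  by rewrite /a; field; rewrite gt_eqF.
move: V2le; case: (value_fun P E U p q cbar x1 c) => [v1| |] h.
- rewrite leeBlDr //; apply: le_trans h _.
  by rewrite -!EFinD lee_fin; lra.
- by rewrite /= addeNy leNye.
- by move: h; rewrite addNye leeNy_eq => /eqP ->; rewrite addNye leNye.
Qed.
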